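(* Let $f$ be a polynomial with integer coefficients of degree $r\ge3$ with positive leading coefficient, positive and strictly increasing on $[0,\infty)$, and let $g_N(x)=f'(x)\left(1-\frac{f(x)}{f(N)}\right)\big/\int_0^N f'(t)\left(1-\frac{f(t)}{f(N)}\right)dt$. Let $\mathcal{I}_N=\bigcup_{a\in\mathbb{Z}}[a-N^{-r+\frac1r},a+N^{-r+\frac1r}]$. Then \[ \liminf_{N\to\infty}\inf_{\alpha\in\mathcal{I}_N}\sum_{j=1}^N g_N(j)\left[e(\alpha f(j))+e(-\alpha f(j))\right]\ge0. \]
   Context: $e(\alpha)=e^{2\pi i\alpha}$. *)

(* Defs.v *)
From Stdlib Require Import Reals ZArith.
From Coquelicot Require Import Coquelicot.
Open Scope R_scope.

Definition e (a : R) : C := (cos (2 * PI * a), sin (2 * PI * a)).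

Definition fpoly (c : nat -> Z) (r : nat) (x : R) : R :=
  sum_f_R0 (fun k => IZR (c k) * x ^ k) r.

Definition hN (c : nat -> Z) (r N : nat) (x : R) : R :=
  Derive (fpoly c r) x * (1 - fpoly c r x / fpoly c r (INR N)).

Definition gN (c : nat -> Z) (r N : nat) (x : R) : R :=
  hN c r N x / RInt (hN c r N) 0 (INR N).

Definition in_IN (r N : nat) (alpha : R) : Prop :=
  exists a : Z,
    IZR a - Rpower (INR N) (- INR r + / INR r) <= alpha <=
    IZR a + Rpower (INR N) (- INR r + / INR r).

Definition SN (c : nat -> Z) (r N : nat) (alpha : R) : C :=
  sum_n_m (fun j : nat =>
     Cmult (RtoC (gN c r N (INR j)))
           (Cplus (e (alpha * fpoly c r (INR j))) (e (- alpha * fpoly c r (INR j)))))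
    1 N.

Definition infN (c : nat -> Z) (r N : nat) : R :=
  real (Glb_Rbar (fun y => exists alpha, in_IN r N alpha /\ y = Re (SN c r N alpha))).

(* Main.v *)
Require Import Defs.
From Stdlib Require Import Reals ZArith Lra Lia.
From Coquelicot Require Import Coquelicot.
Open Scope R_scope.

Definition P (a : nat -> R) (n : nat) (x : R) := sum_f_R0 (fun k => a k * x ^ k) n.
Definition sa (a : nat -> R) (n : nat) := sum_f_R0 (fun k => Rabs (a k)) n.

Lemma sa_ge0 a n : 0 <= sa a n.
Proof. unfold sa; induction n; simpl; [apply Rabs_pos | pose proof (Rabs_pos (a (S n))); lra]. Qed.

Lemma P_S a n x : P a (S n) x = P a n x + a (S n) * x ^ S n.
Proof. reflexivity. Qed.
Lemma sa_S a n : sa a (S n) = sa a n + Rabs (a (S n)).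
Proof. reflexivity. Qed.

Lemma pow_ge1_mono (N : R) n : 1 <= N -> N ^ n <= N ^ S n.
Proof. intros H. simpl. assert (0 <= N ^ n) by (apply pow_le; lra). nra. Qed.

Lemma P_bound a n x N : 0 <= x <= N -> 1 <= N -> Rabs (P a n x) <= sa a n * N ^ n.
Proof.
  intros Hx HN. induction n.
  - unfold P, sa; simpl. rewrite Rmult_1_r, Rmult_1_r; lra.
  - rewrite P_S, sa_S.
    eapply Rle_trans; [apply Rabs_triang|].
    rewrite Rabs_mult, <- RPow_abs.
    assert (Rabs x ^ S n <= N ^ S n) by (apply pow_incr; split; [apply Rabs_pos| rewrite Rabs_right; lra]).
    pose proof (pow_ge1_mono N n HN).
    pose proof (sa_ge0 a n).
    pose proof (Rabs_pos (a (S n))).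
    assert (0 <= Rabs x ^ S n) by (apply pow_le, Rabs_pos).
    nra.
Qed.

Lemma pow_lip x y N k : 0 <= x <= N -> 0 <= y <= N ->
  Rabs (y ^ S k - x ^ S k) <= INR (S k) * N ^ k * Rabs (y - x).
Proof.
  intros Hx Hy. induction k.
  - simpl. rewrite !Rmult_1_r. lra.
  - replace (y ^ S (S k) - x ^ S (S k)) with (y * (y ^ S k - x ^ S k) + x ^ S k * (y - x)) by (simpl; ring).
    eapply Rle_trans; [apply Rabs_triang|].
    rewrite !Rabs_mult.
    assert (Rabs x ^ S k <= N ^ S k) by (apply pow_incr; split; [apply Rabs_pos| rewrite Rabs_right; lra]).
    rewrite <- RPow_abs.
    assert (Rabs y <= N) by (rewrite Rabs_right; lra).
    pose proof (Rabs_pos y). pose proof (Rabs_pos (y - x)).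
    pose proof (Rabs_pos (y ^ S k - x ^ S k)).
    assert (0 <= N ^ k) by (apply pow_le; lra).
    rewrite S_INR. rewrite S_INR in IHk. simpl (N ^ S k) in *.
    assert (0 <= INR k) by apply pos_INR.
    rewrite S_INR.
    assert (Rabs y * Rabs (y ^ S k - x ^ S k) <= N * ((INR k + 1) * N ^ k * Rabs (y - x))) by (apply Rmult_le_compat; lra).
    assert (Rabs x ^ S k * Rabs (y - x) <= N * N ^ k * Rabs (y - x)) by (apply Rmult_le_compat_r; lra).
    nra.
Qed.

Lemma P_lip a n x y N : 0 <= x <= N -> 0 <= y <= N -> 1 <= N ->
  Rabs (P a (S n) y - P a (S n) x) <= INR (S n) * sa a (S n) * N ^ n * Rabs (y - x).
Proof.
  intros Hx Hy HN. induction n.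
  - unfold P, sa; simpl. replace (a 0%nat * 1 + a 1%nat * (y * 1) - (a 0%nat * 1 + a 1%nat * (x * 1))) with (a 1%nat * (y - x)) by ring.
    rewrite Rabs_mult. pose proof (Rabs_pos (a 0%nat)). pose proof (Rabs_pos (y-x)). nra.
  - replace (P a (S (S n)) y - P a (S (S n)) x) with ((P a (S n) y - P a (S n) x) + a (S (S n)) * (y ^ S (S n) - x ^ S (S n))) by (rewrite !(P_S a (S n)); ring).
    eapply Rle_trans; [apply Rabs_triang|]. rewrite Rabs_mult.
    pose proof (pow_lip x y N (S n) Hx Hy).
    pose proof (pow_ge1_mono N n HN).
    pose proof (sa_ge0 a (S n)).
    rewrite (sa_S a (S n)).
    pose proof (Rabs_pos (a (S (S n)))). pose proof (Rabs_pos (y-x)).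
    assert (0 <= N ^ n) by (apply pow_le; lra).
    assert (INR (S (S n)) = INR (S n) + 1) by (rewrite (S_INR (S n)); ring).
    assert (0 <= INR (S n)) by apply pos_INR.
    rewrite H5 in H |- *.
    set (A := sa a (S n)) in *. set (B := Rabs (a (S (S n)))) in *.
    set (D := Rabs (y - x)) in *. set (M := N ^ n) in *. set (M' := N ^ S n) in *.
    set (I := INR (S n)) in *.
    assert (A * M <= A * M') by nra.
    assert (I * A * M * D <= I * A * M' * D) by (apply Rmult_le_compat_r; [lra|]; rewrite !Rmult_assoc; apply Rmult_le_compat_l; [lra|]; nra).
    assert (B * Rabs (y ^ S (S n) - x ^ S (S n)) <= B * ((I+1) * M' * D)) by (apply Rmult_le_compat_l; lra).
    assert (0 <= M') by (unfold M'; apply pow_le; lra).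
    assert (0 <= A * M' * D) by (apply Rmult_le_pos; [apply Rmult_le_pos|]; lra). nra.
Qed.

Definition dcoef (a : nat -> R) := fun k => INR (S k) * a (S k).

Lemma P_derive a n x : is_derive (P a (S n)) x (P (dcoef a) n x).
Proof.
  induction n.
  - unfold P, dcoef; simpl. auto_derive; auto. change (a 1%nat * (1 * 1) = 1 * a 1%nat * 1)%R. ring.
  - assert (E : forall y, P a (S (S n)) y = P a (S n) y + a (S (S n)) * y ^ S (S n)) by reflexivity.
    apply is_derive_ext with (fun y => P a (S n) y + a (S (S n)) * y ^ S (S n)).
    { intros; symmetry; apply E. }
    replace (P (dcoef a) (S n) x) with (P (dcoef a) n x + a (S (S n)) * (INR (S (S n)) * x ^ S n)).
    2:{ rewrite (P_S (dcoef a) n). unfold dcoef. ring. }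
    apply (is_derive_plus (P a (S n))). exact IHn.
    apply (is_derive_scal (fun y => y ^ S (S n))).
    pose proof (is_derive_pow (fun y => y) (S (S n)) x 1 (is_derive_id x)).
    simpl in H. replace (INR (S (S n)) * x ^ S n) with (INR (S (S n)) * 1 * x ^ Nat.pred (S (S n))) by (simpl; ring).
    exact H.
Qed.

Lemma cos_lip u v : Rabs (cos u - cos v) <= Rabs (u - v).
Proof.
  destruct (MVT_abs cos (fun x => - sin x) v u) as [c [Hc _]].
  { intros c _. apply derivable_pt_lim_cos. }
  rewrite Hc, Rabs_Ropp. pose proof (SIN_bound c).
  assert (Rabs (sin c) <= 1) by (apply Rabs_le; lra).
  pose proof (Rabs_pos (u - v)). nra.
Qed.

Lemma sin_abs_le t : Rabs (sin t) <= Rabs t.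
Proof.
  destruct (MVT_abs sin cos 0 t) as [c [Hc _]].
  { intros c _. apply derivable_pt_lim_sin. }
  rewrite sin_0, Rminus_0_r, Rminus_0_r in Hc. rewrite Hc. pose proof (COS_bound c).
  assert (Rabs (cos c) <= 1) by (apply Rabs_le; lra).
  pose proof (Rabs_pos t). nra.
Qed.

Lemma one_minus_cos t : 1 - cos t <= t ^ 2 / 2.
Proof.
  replace t with (2 * (t / 2)) at 1 by field.
  rewrite cos_2a_sin. pose proof (sin_abs_le (t/2)).
  assert (sin (t/2) ^ 2 <= (t/2) ^ 2).
  { rewrite <- (pow2_abs (sin _)), <- (pow2_abs (t/2)). pose proof (Rabs_pos (sin (t/2))). nra. }
  nra.
Qed.

Lemma cos_period_Z x k : cos (x + 2 * IZR k * PI) = cos x.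
Proof.
  destruct (Z_le_gt_dec 0 k).
  - rewrite <- (Z2Nat.id k) by lia. rewrite <- INR_IZR_INZ. apply cos_period.
  - replace k with (- Z.of_nat (Z.to_nat (- k)))%Z by lia.
    rewrite opp_IZR, <- INR_IZR_INZ.
    rewrite <- (cos_period (x + 2 * - INR (Z.to_nat (- k)) * PI) (Z.to_nat (-k))).
    f_equal. ring.
Qed.

Definition G (F s u : R) : R :=
  if Req_EM_T s 0 then u - u ^ 2 / (2 * F)
  else (1 - u / F) * sin (s * u) / s - cos (s * u) / (s ^ 2 * F).

Lemma G_derive F s u : F <> 0 -> is_derive (G F s) u ((1 - u / F) * cos (s * u)).
Proof.
  intros HF. unfold G. destruct (Req_EM_T s 0) as [Hs|Hs].
  - subst s. auto_derive; auto. rewrite Rmult_0_l, cos_0. field. auto.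
  - auto_derive. repeat split; auto. revert u. intro u. unfold Rminus, Rdiv. field. auto.
Qed.

Lemma G_diff F s u0 : 0 < u0 -> u0 <= F -> - 2 * u0 <= G F s F - G F s u0.
Proof.
  intros H0 HF. unfold G. destruct (Req_EM_T s 0) as [Hs|Hs].
  - replace (F - F ^ 2 / (2 * F) - (u0 - u0 ^ 2 / (2 * F))) with ((F - u0) ^ 2 / (2 * F)) by (field; lra).
    assert (0 <= (F - u0) ^ 2 / (2 * F)) by (apply Rdiv_le_0_compat; nra).
    lra.
  - assert (Hs2 : 0 < s ^ 2) by (apply pow2_gt_0; auto).
    pose proof (one_minus_cos (s * u0)) as Hc0.
    pose proof (COS_bound (s * F)) as HcF.
    replace ((1 - F / F) * sin (s * F) / s - cos (s * F) / (s ^ 2 * F) -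
        ((1 - u0 / F) * sin (s * u0) / s - cos (s * u0) / (s ^ 2 * F)))
      with ((1 - cos (s * F)) / (s ^ 2 * F) - (1 - cos (s * u0)) / (s ^ 2 * F) - (1 - u0/F) * (sin (s * u0) / s))
      by (field; lra).
    assert (A1 : 0 <= (1 - cos (s * F)) / (s ^ 2 * F)) by (apply Rdiv_le_0_compat; nra).
    assert (A2 : (1 - cos (s * u0)) / (s ^ 2 * F) <= u0 / 2).
    { apply Rle_div_l; [nra|]. assert (u0 * u0 <= u0 * F) by nra.
      replace ((s * u0) ^ 2 / 2) with (s^2 * (u0 * u0) / 2) in Hc0 by field. nra. }
    assert (A3 : Rabs (sin (s * u0) / s) <= u0).
    { rewrite Rabs_div by auto. apply Rle_div_l. apply Rabs_pos_lt; auto.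
      pose proof (sin_abs_le (s * u0)). rewrite Rabs_mult, (Rabs_right u0) in H by lra. lra. }
    assert (A4 : 0 <= 1 - u0 / F <= 1).
    { split. assert (u0 / F <= 1) by (apply Rle_div_l; lra). lra. assert (0 <= u0 / F) by (apply Rdiv_le_0_compat; lra). lra. }
    apply Rabs_le_between in A3.
    nra.
Qed.

Lemma H_lip d1 d2 v1 v2 F s L1 L0 B1 B0 :
  0 < F -> Rabs (d1 - d2) <= L1 -> Rabs (v1 - v2) <= L0 ->
  Rabs d2 <= B1 -> Rabs v1 <= B0 -> Rabs v2 <= B0 ->
  Rabs (d1 * (1 - v1 / F) * cos (s * v1) - d2 * (1 - v2 / F) * cos (s * v2))
  <= L1 * (1 + B0 / F) + B1 * L0 / F + B1 * (1 + B0 / F) * (Rabs s * L0).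
Proof.
  intros HF H1 H0 HB1 HB0 HB0'.
  replace (d1 * (1 - v1 / F) * cos (s * v1) - d2 * (1 - v2 / F) * cos (s * v2))
    with (((d1 - d2) * (1 - v1 / F) + d2 * ((v2 - v1) / F)) * cos (s * v1)
          + d2 * (1 - v2 / F) * (cos (s * v1) - cos (s * v2))) by (field; lra).
  eapply Rle_trans; [apply Rabs_triang|].
  assert (Hc : Rabs (cos (s * v1)) <= 1) by (apply Rabs_le; apply COS_bound).
  assert (Hcd : Rabs (cos (s * v1) - cos (s * v2)) <= Rabs s * L0).
  { eapply Rle_trans; [apply cos_lip|]. replace (s * v1 - s * v2) with (s * (v1 - v2)) by ring.
    rewrite Rabs_mult. apply Rmult_le_compat_l; [apply Rabs_pos|lra]. }
  assert (Hq : forall v, Rabs v <= B0 -> Rabs (1 - v / F) <= 1 + B0 / F).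
  { intros v Hv. eapply Rle_trans; [apply Rabs_triang|]. rewrite Rabs_Ropp, Rabs_R1.
    rewrite Rabs_div by lra. rewrite (Rabs_right F) by lra.
    apply Rplus_le_compat_l. apply Rmult_le_compat_r; [apply Rlt_le, Rinv_0_lt_compat; lra| lra]. }
  pose proof (Hq _ HB0). pose proof (Hq _ HB0').
  assert (Hw : Rabs ((v2 - v1) / F) <= L0 / F).
  { rewrite Rabs_div by lra. rewrite (Rabs_right F) by lra. rewrite <- Rabs_Ropp.
    replace (- (v2 - v1)) with (v1 - v2) by ring.
    apply Rmult_le_compat_r; [apply Rlt_le, Rinv_0_lt_compat; lra| lra]. }
  rewrite !Rabs_mult.
  assert (HA : Rabs ((d1 - d2) * (1 - v1 / F) + d2 * ((v2 - v1) / F)) <= L1 * (1 + B0 / F) + B1 * (L0 / F)).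
  { eapply Rle_trans; [apply Rabs_triang|]. rewrite !Rabs_mult.
    apply Rplus_le_compat; apply Rmult_le_compat; try apply Rabs_pos; lra. }
  assert (Rabs ((d1 - d2) * (1 - v1 / F) + d2 * ((v2 - v1) / F)) * Rabs (cos (s * v1)) <= L1 * (1 + B0 / F) + B1 * (L0 / F)).
  { eapply Rle_trans; [|apply HA]. pose proof (Rabs_pos ((d1 - d2) * (1 - v1 / F) + d2 * ((v2 - v1) / F))). nra. }
  assert (Rabs d2 * Rabs (1 - v2 / F) * Rabs (cos (s * v1) - cos (s * v2)) <= B1 * (1 + B0 / F) * (Rabs s * L0)).
  { apply Rmult_le_compat; try apply Rmult_le_pos; try apply Rabs_pos; try lra.
    apply Rmult_le_compat; try apply Rabs_pos; lra. }
  unfold Rdiv in *. lra.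
Qed.

Lemma sum_S_R (u : nat -> R) N : sum_n_m u 1 (S N) = sum_n_m u 1 N + u (S N).
Proof.
  destruct N.
  - rewrite sum_n_n, sum_n_m_zero by lia. unfold zero; simpl. ring.
  - rewrite sum_n_Sm by lia. reflexivity.
Qed.

Lemma sum_S_C (u : nat -> C) N : sum_n_m u 1 (S N) = Cplus (sum_n_m u 1 N) (u (S N)).
Proof.
  destruct N.
  - rewrite sum_n_n, sum_n_m_zero by lia. unfold zero; simpl. apply injective_projections; simpl; ring.
  - rewrite sum_n_Sm by lia. reflexivity.
Qed.

Lemma Re_sum (u : nat -> C) N : Re (sum_n_m u 1 N) = sum_n_m (fun j => Re (u j)) 1 N.
Proof.
  induction N.
  - rewrite !sum_n_m_zero by lia. reflexivity.
  - rewrite sum_S_C, sum_S_R, <- IHN. reflexivity.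
Qed.

Lemma telescope (u : nat -> R) (Phi : R -> R) K D N :
  (forall j, (1 <= j <= N)%nat -> K * (Phi (INR j) - Phi (INR j - 1)) - D <= u j) ->
  K * (Phi (INR N) - Phi 0) - INR N * D <= sum_n_m u 1 N.
Proof.
  induction N; intros H.
  - rewrite sum_n_m_zero by lia. unfold zero; simpl. replace (Phi 0 - Phi 0) with 0 by ring. lra.
  - rewrite sum_S_R. assert (IH := IHN (fun j Hj => H j ltac:(lia))).
    specialize (H (S N) ltac:(lia)). rewrite S_INR in *.
    replace (INR N + 1 - 1) with (INR N) in H by ring. lra.
Qed.

Lemma glb_lower (E : R -> Prop) b y0 : E y0 -> (forall y, E y -> b <= y) -> b <= real (Glb_Rbar E).
Proof.
  intros Hy Hb. destruct (Glb_Rbar_correct E) as [H1 H2].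
  assert (L1 : Rbar_le (Glb_Rbar E) y0) by (apply H1; auto).
  assert (L2 : Rbar_le b (Glb_Rbar E)) by (apply H2; intros y Ey; apply Hb; auto).
  destruct (Glb_Rbar E); simpl in *; auto; contradiction.
Qed.

Lemma fpoly_int c r j : exists z, fpoly c r (INR j) = IZR z.
Proof.
  induction r.
  - exists (c 0%nat). unfold fpoly; simpl. ring.
  - destruct IHr as [z Hz]. exists (z + c (S r) * Z.of_nat j ^ Z.of_nat (S r))%Z.
    change (fpoly c (S r) (INR j)) with (fpoly c r (INR j) + IZR (c (S r)) * INR j ^ S r).
    rewrite Hz, plus_IZR, mult_IZR, <- pow_IZR, <- INR_IZR_INZ. reflexivity.
Qed.

Lemma Phi_derive a m F s x : F <> 0 ->
  is_derive (fun y => G F s (P a (S (S m)) y)) x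
    (P (dcoef a) (S m) x * (1 - P a (S (S m)) x / F) * cos (s * P a (S (S m)) x)).
Proof.
  intros HF.
  pose proof (is_derive_comp (G F s) (P a (S (S m))) x _ _ (G_derive F s (P a (S (S m)) x) HF) (P_derive a (S m) x)) as H.
  unfold scal in H; simpl in H; unfold mult in H; simpl in H.
  rewrite <- Rmult_assoc in H. exact H.
Qed.

Lemma integrand_cont a m F x : F <> 0 ->
  continuous (fun y => P (dcoef a) (S m) y * (1 - P a (S (S m)) y / F)) x.
Proof.
  intros HF.
  apply (@ex_derive_continuous R_AbsRing R_NormedModule).
  auto_derive. split; [|split; [|trivial]]; eexists; apply P_derive.
Qed.

Lemma RInt_h a m F N : F <> 0 ->
  RInt (fun y => P (dcoef a) (S m) y * (1 - P a (S (S m)) y / F)) 0 N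
  = G F 0 (P a (S (S m)) N) - G F 0 (P a (S (S m)) 0).
Proof.
  intros HF. apply is_RInt_unique.
  apply (is_RInt_ext (fun y => P (dcoef a) (S m) y * (1 - P a (S (S m)) y / F) * cos (0 * P a (S (S m)) y))).
  { intros; rewrite Rmult_0_l, cos_0, Rmult_1_r; reflexivity. }
  apply (is_RInt_derive (fun y => G F 0 (P a (S (S m)) y))).
  - intros; apply Phi_derive; auto.
  - intros y _.
    apply (continuous_ext (fun y => P (dcoef a) (S m) y * (1 - P a (S (S m)) y / F))).
    { intros; rewrite Rmult_0_l, cos_0, Rmult_1_r; reflexivity. }
    apply integrand_cont; auto.
Qed.

Lemma liminf_ge0 (u : nat -> R) :
  (forall eps, 0 < eps -> eventually (fun n => - eps <= u n)) -> Rbar_le 0 (LimInf_seq u).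
Proof.
  intros H.
  assert (Hk : forall eps, 0 < eps -> Rbar_le (- eps) (LimInf_seq u)).
  { intros eps He. rewrite <- (LimInf_seq_const (- eps)). apply LimInf_le. apply H; auto. }
  destruct (LimInf_seq u) as [l| |] eqn:E; simpl.
  - destruct (Rle_dec 0 l) as [|Hl]; auto.
    specialize (Hk (- l / 2) ltac:(lra)). simpl in Hk. lra.
  - trivial.
  - specialize (Hk 1 ltac:(lra)). simpl in Hk. exact Hk.
Qed.

Lemma ev_INR M : eventually (fun n => M <= INR n).
Proof.
  pose proof is_lim_seq_INR as H.
  apply (H (fun x => M <= x)). exists M. intros; lra.
Qed.

Lemma Re_term g u v : Re (Cmult (RtoC g) (Cplus (e u) (e v))) = g * (cos (2 * PI * u) + cos (2 * PI * v)).
Proof. unfold e, RtoC, Cmult, Cplus, Re; simpl. ring. Qed.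

Lemma npdelta n m' : 1 <= n -> (1 <= m')%nat ->
  n * n ^ m' * Rpower n (- INR (S (S m')) + / INR (S (S m'))) <= / sqrt n.
Proof.
  intros Hn Hm.
  replace (n * n ^ m') with (n ^ S m') by reflexivity.
  rewrite <- Rpower_pow by lra. rewrite <- Rpower_plus.
  rewrite <- Rpower_sqrt by lra. rewrite <- Rpower_Ropp.
  apply Rle_Rpower; auto.
  rewrite (S_INR (S m')).
  assert (3 <= INR (S (S m'))) by (replace 3 with (INR 3) by (simpl; ring); apply le_INR; lia).
  assert (/ INR (S (S m')) <= / 3) by (apply Rinv_le_contravar; lra).
  rewrite (S_INR (S m')) in *. lra.
Qed.

Ltac pos := repeat (match goal with |- 0 <= ?a * ?b => apply Rmult_le_pos | |- 0 <= ?a + ?b => apply Rplus_le_le_0_compat end); try lra.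

Definition A0 c m' := sa (fun k => IZR (c k)) (S (S m')).
Definition A1 c m' := sa (dcoef (fun k => IZR (c k))) (S m').
Definition K1 c m' := INR (S m') * A1 c m' * (1 + 2 * A0 c m') + 2 * INR (S (S m')) * A0 c m' * A1 c m'.
Definition K2 c m' := A1 c m' * (1 + 2 * A0 c m') * INR (S (S m')) * A0 c m'.
Definition Kc c m' := 64 * fpoly c (S (S m')) 0 + 32 * K1 c m' + 64 * PI * K2 c m'.

Lemma core c m' N alpha :
  (1 <= m')%nat ->
  (0 < c (S (S m')))%Z -> 0 < fpoly c (S (S m')) 0 ->
  1 + 2 * sa (fun k => IZR (c k)) (S m') + 4 * fpoly c (S (S m')) 0 <= INR N ->
  in_IN (S (S m')) N alpha ->
  - Kc c m' / sqrt (INR N) <= Re (SN c (S (S m')) N alpha).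
Proof.
  intros Hm Hcr Hf0 HN Hal.
  set (r := S (S m')) in *. set (a := fun k => IZR (c k)) in *.
  set (a' := dcoef a).
  assert (Hfp : forall x, fpoly c r x = P a r x) by reflexivity.
  assert (HD : forall x, Derive (fpoly c r) x = P a' (S m') x).
  { intros x. apply is_derive_unique. apply (P_derive a (S m') x). }
  set (n := INR N) in *.
  pose proof (sa_ge0 a (S m')) as HS'.
  set (S' := sa a (S m')) in *.
  set (f0 := fpoly c r 0) in *.
  assert (Hn1 : 1 <= n) by lra.
  set (p := n ^ m').
  assert (Hp : 1 <= p) by (apply pow_R1_Rle; lra).
  set (F := P a r n).
  assert (HF : n * n * p / 2 <= F).
  { assert (Har : 1 <= a r) by (unfold a; apply IZR_le; lia).
    assert (Hb := P_bound a (S m') n n ltac:(lra) Hn1).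
    apply Rabs_le_between in Hb. fold S' in Hb.
    unfold F, r. rewrite (P_S a (S m') n). fold r.
    replace (n ^ S m') with (n * p) in Hb by reflexivity.
    replace (n ^ r) with (n * (n * p)) by reflexivity.
    assert (0 <= n * (n * p)) by nra.
    assert (0 <= n * p) by nra.
    nra. }
  assert (Hf0F : 2 * f0 <= F) by nra.
  assert (HFpos : 0 < F) by lra.
  set (I := RInt (hN c r N) 0 n).
  assert (HI : I = (F - f0) ^ 2 / (2 * F)).
  { assert (Hh : forall x, hN c r N x = P a' (S m') x * (1 - P a (S (S m')) x / F)).
    { intros x. unfold hN. rewrite HD. reflexivity. }
    assert (E1 : I = RInt (fun y => P a' (S m') y * (1 - P a (S (S m')) y / F)) 0 n).
    { apply RInt_ext. intros x _. apply Hh. }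
    rewrite E1.
    unfold a'. rewrite RInt_h by lra. unfold G. destruct (Req_EM_T 0 0) as [_|]; [|lra].
    fold r. change (P a r 0) with f0. fold F. match goal with |- ?x = ?y => change (@eq R x y) end. field. lra. }
  assert (HIlow : n * n * p / 16 <= I).
  { rewrite HI. assert (F * F / 4 <= (F - f0) ^ 2) by nra. assert (F / 8 = (F * F / 4) * / (2 * F)) by (field; lra). assert ((F * F / 4) * / (2 * F) <= (F - f0) ^ 2 * / (2 * F)) by (apply Rmult_le_compat_r; [apply Rlt_le, Rinv_0_lt_compat|]; lra). unfold Rdiv at 2. lra. }
  assert (HIpos : 0 < I) by nra.
  destruct Hal as [a0 Hal]. change (INR N) with n in Hal. fold r in Hal.
  set (delta := Rpower n (- INR r + / INR r)) in *.
  assert (Hdel : 0 < delta) by (unfold delta, Rpower; apply exp_pos).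
  set (beta := alpha - IZR a0).
  set (s := 2 * PI * beta).
  assert (Hs : Rabs s <= 2 * PI * delta).
  { unfold s. rewrite Rabs_mult, (Rabs_right (2 * PI)) by (pose proof PI_RGT_0; lra).
    apply Rmult_le_compat_l; [pose proof PI_RGT_0; lra|]. apply Rabs_le. unfold beta; lra. }
  set (Phi := fun y => G F s (P a r y)).
  set (H := fun y => P a' (S m') y * (1 - P a r y / F) * cos (s * P a r y)).
  pose proof (sa_ge0 a r) as HA0. pose proof (sa_ge0 a' (S m')) as HA1.
  set (E := INR (S m') * A1 c m' * p * (1 + 2 * A0 c m') + 2 * INR r * A0 c m' * A1 c m' * p
     + A1 c m' * (n * p) * (1 + 2 * A0 c m') * ((2 * PI * delta) * (INR r * A0 c m' * (n * p)))).
  unfold SN. rewrite Re_sum.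
  apply Rle_trans with ((2 / I) * (Phi n - Phi 0) - n * ((2 / I) * E)).
  - assert (HPhi : - 2 * f0 <= Phi n - Phi 0).
    { unfold Phi. change (P a r n) with F. change (P a r 0) with f0. apply G_diff; lra. }
    change (sa a r) with (A0 c m') in HA0. change (sa a' (S m')) with (A1 c m') in HA1.
    pose proof PI_RGT_0 as Hpi.
    pose proof (pos_INR (S m')) as Hm0. pose proof (pos_INR r) as Hr0.
    assert (HK1 : 0 <= K1 c m') by (unfold K1; fold r; assert (0 <= 1 + 2 * A0 c m') by lra; apply Rplus_le_le_0_compat; repeat apply Rmult_le_pos; lra).
    assert (HK2 : 0 <= K2 c m') by (unfold K2; fold r; repeat apply Rmult_le_pos; lra).
    assert (Hnp : 0 < n * p) by nra.
    assert (HE0 : 0 <= E).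
    { unfold E. assert (0 <= 1 + 2 * A0 c m') by lra. assert (0 <= 2 * PI * delta) by nra.
      set (D2 := 2 * PI * delta) in *. set (B := 1 + 2 * A0 c m') in *.
      pos. }
    set (Q := 2 * f0 + n * E).
    assert (HQ : 0 <= Q) by (unfold Q; nra).
    assert (Hstep1 : - (2 / I) * Q <= (2 / I) * (Phi n - Phi 0) - n * ((2 / I) * E)).
    { assert (0 < 2 / I) by (apply Rdiv_lt_0_compat; lra). unfold Q. nra. }
    assert (H2I : 2 / I <= 32 / (n * n * p)).
    { unfold Rdiv. apply Rle_trans with (2 * / (n * n * p / 16)).
      - apply Rmult_le_compat_l; [lra|]. apply Rinv_le_contravar; [nra|lra].
      - right. field. lra. }
    assert (Hstep2 : (2 / I) * Q <= 32 / (n * n * p) * Q) by (apply Rmult_le_compat_r; lra).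
    set (w := n * p * delta).
    assert (Hw : w <= / sqrt n) by (apply npdelta; auto).
    assert (Heq : 32 / (n * n * p) * Q = 64 * f0 / (n * n * p) + 32 * K1 c m' / n + 64 * PI * K2 c m' * w).
    { unfold Q, E, w, K1, K2. fold r. match goal with |- ?x = ?y => change (@eq R x y) end. field. lra. }
    assert (Hsq : 0 < sqrt n) by (apply sqrt_lt_R0; lra).
    assert (Hsqn : sqrt n <= n).
    { rewrite <- (sqrt_square n) at 2 by lra. apply sqrt_le_1_alt. nra. }
    assert (Hinv : / n <= / sqrt n) by (apply Rinv_le_contravar; lra).
    assert (T1 : 64 * f0 / (n * n * p) <= 64 * f0 * / sqrt n).
    { unfold Rdiv. apply Rmult_le_compat_l; [lra|]. eapply Rle_trans; [|apply Hinv].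
      apply Rinv_le_contravar; nra. }
    assert (T2 : 32 * K1 c m' / n <= 32 * K1 c m' * / sqrt n).
    { unfold Rdiv. apply Rmult_le_compat_l; lra. }
    assert (T3 : 64 * PI * K2 c m' * w <= 64 * PI * K2 c m' * / sqrt n).
    { apply Rmult_le_compat_l; [|lra]. pos. }
    unfold Kc. change (fpoly c (S (S m')) 0) with f0.
    unfold Rdiv at 1. lra.
  - apply telescope. intros j Hj.
    rewrite Re_term.
    destruct (fpoly_int c r j) as [z Hz].
    assert (Hx : 1 <= INR j <= n) by (split; [apply (le_INR 1) | apply le_INR]; lia).
    set (x := INR j) in *.
    assert (Hc1 : cos (2 * PI * (alpha * fpoly c r x)) = cos (s * P a r x)).
    { rewrite <- Hfp, Hz. rewrite <- (cos_period_Z (s * IZR z) (a0 * z)).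
      f_equal. unfold s, beta. rewrite mult_IZR. ring. }
    assert (Hc2 : cos (2 * PI * (- alpha * fpoly c r x)) = cos (s * P a r x)).
    { rewrite <- Hc1, <- cos_neg. f_equal. ring. }
    rewrite Hc1, Hc2.
    assert (Hg : gN c r N x = P a' (S m') x * (1 - P a r x / F) / I).
    { unfold gN, hN. rewrite HD. reflexivity. }
    rewrite Hg.
    replace (P a' (S m') x * (1 - P a r x / F) / I * (cos (s * P a r x) + cos (s * P a r x)))
      with (2 / I * H x) by (unfold H; field; lra).
    destruct (MVT_gen Phi (x - 1) x H) as [xi [Hxi Heq]].
    { intros y _. apply Phi_derive. lra. }
    { intros y _. apply continuity_pt_filterlim. apply (@ex_derive_continuous R_AbsRing R_NormedModule).
      eexists. apply Phi_derive. lra. }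
    rewrite Rmin_left, Rmax_right in Hxi by lra.
    replace (x - (x - 1)) with 1 in Heq by ring. rewrite Rmult_1_r in Heq.
    assert (HE : Rabs (H x - H xi) <= E).
    { assert (Hd : Rabs (x - xi) <= 1) by (apply Rabs_le; lra).
      assert (Hx0 : 0 <= x <= n) by lra. assert (Hxi0 : 0 <= xi <= n) by lra.
      pose proof (P_lip a' m' xi x n Hxi0 Hx0 Hn1) as L1.
      pose proof (P_lip a (S m') xi x n Hxi0 Hx0 Hn1) as L0.
      pose proof (P_bound a' (S m') xi n Hxi0 Hn1) as B1.
      pose proof (P_bound a r x n Hx0 Hn1) as B0.
      pose proof (P_bound a r xi n Hxi0 Hn1) as B0'.
      change (sa a r) with (A0 c m') in *. change (sa a' (S m')) with (A1 c m') in *.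
      fold p in L1. replace (n ^ S m') with (n * p) in * by reflexivity.
      replace (n ^ r) with (n * (n * p)) in * by reflexivity.
      pose proof (pos_INR (S m')) as Hm0. pose proof (pos_INR r) as Hr0.
      assert (L1' : Rabs (P a' (S m') x - P a' (S m') xi) <= INR (S m') * A1 c m' * p).
      { eapply Rle_trans; [apply L1|]. apply Rle_trans with (INR (S m') * A1 c m' * p * 1); [|lra].
        apply Rmult_le_compat_l; auto. apply Rmult_le_pos; [apply Rmult_le_pos|]; lra. }
      assert (L0' : Rabs (P a r x - P a r xi) <= INR r * A0 c m' * (n * p)).
      { eapply Rle_trans; [apply L0|]. apply Rle_trans with (INR r * A0 c m' * (n * p) * 1); [|lra].
        apply Rmult_le_compat_l; auto. apply Rmult_le_pos; [apply Rmult_le_pos|]; nra. }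
      pose proof (H_lip _ _ _ _ F s _ _ _ _ HFpos L1' L0' B1 B0 B0') as HL.
      unfold H. eapply Rle_trans; [apply HL|].
      assert (Hq : A0 c m' * (n * (n * p)) / F <= 2 * A0 c m').
      { apply Rle_div_l; [lra|]. nra. }
      assert (Hq2 : A1 c m' * (n * p) * (INR r * A0 c m' * (n * p)) / F <= 2 * INR r * A0 c m' * A1 c m' * p).
      { apply Rle_div_l; [lra|].
        replace (A1 c m' * (n * p) * (INR r * A0 c m' * (n * p))) with ((A1 c m' * INR r * A0 c m' * p) * (n * n * p)) by ring.
        replace (2 * INR r * A0 c m' * A1 c m' * p * F) with ((A1 c m' * INR r * A0 c m' * p) * (2 * F)) by ring.
        apply Rmult_le_compat_l; [|lra]. repeat apply Rmult_le_pos; lra. }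
      assert (0 <= n * p) by nra.
      assert (0 <= A0 c m' * (n * (n * p)) / F) by (apply Rdiv_le_0_compat; [repeat apply Rmult_le_pos|]; lra).
      assert (0 <= INR r * A0 c m' * (n * p)) by (repeat apply Rmult_le_pos; lra).
      assert (T1 : INR (S m') * A1 c m' * p * (1 + A0 c m' * (n * (n * p)) / F) <= INR (S m') * A1 c m' * p * (1 + 2 * A0 c m')).
      { apply Rmult_le_compat_l; [repeat apply Rmult_le_pos|]; lra. }
      assert (T3a : Rabs s * (INR r * A0 c m' * (n * p)) <= (2 * PI * delta) * (INR r * A0 c m' * (n * p))).
      { apply Rmult_le_compat_r; lra. }
      assert (T3 : A1 c m' * (n * p) * (1 + A0 c m' * (n * (n * p)) / F) * (Rabs s * (INR r * A0 c m' * (n * p)))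
                  <= A1 c m' * (n * p) * (1 + 2 * A0 c m') * ((2 * PI * delta) * (INR r * A0 c m' * (n * p)))).
      { apply Rmult_le_compat; try (repeat apply Rmult_le_pos); try apply Rabs_pos; try lra.
        apply Rmult_le_compat_l; [repeat apply Rmult_le_pos|]; lra. }
      unfold E. lra. }
    assert (2 / I > 0) by (apply Rdiv_lt_0_compat; lra).
    apply Rabs_le_between in HE. rewrite Heq. nra.
Qed.

Theorem lemma12 (c : nat -> Z) (r : nat) :
  (3 <= r)%nat ->
  (0 < c r)%Z ->
  (forall x, 0 <= x -> 0 < fpoly c r x) ->
  (forall x y, 0 <= x -> x < y -> fpoly c r x < fpoly c r y) ->
  Rbar_le 0 (LimInf_seq (fun N : nat => infN c r N)).
Proof.
  intros Hr Hc Hpos _.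
  destruct r as [|[|m']]; try lia.
  assert (Hm : (1 <= m')%nat) by lia.
  assert (Hf0 := Hpos 0 (Rle_refl 0)).
  apply liminf_ge0. intros eps Heps.
  set (M0 := 1 + 2 * sa (fun k => IZR (c k)) (S m') + 4 * fpoly c (S (S m')) 0).
  set (K := Kc c m').
  assert (HK : 0 <= K).
  { unfold K, Kc, K1, K2. pose proof (sa_ge0 (fun k => IZR (c k)) (S (S m'))). pose proof (sa_ge0 (dcoef (fun k => IZR (c k))) (S m')).
    fold (A0 c m') (A1 c m') in *. pose proof PI_RGT_0. pose proof (pos_INR (S m')). pose proof (pos_INR (S (S m'))).
    assert (0 <= 1 + 2 * A0 c m') by lra. set (B := 1 + 2 * A0 c m') in *. set (PP := PI) in *. pos. }
  eapply filter_imp; [|apply (ev_INR (M0 + (K / eps) ^ 2))].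
  intros N HN. simpl in HN.
  pose proof (sa_ge0 (fun k => IZR (c k)) (S m')).
  assert (HM0 : M0 <= INR N) by (pose proof (pow2_ge_0 (K / eps)); lra).
  assert (Hn : 1 <= INR N) by (unfold M0 in HM0; lra).
  assert (Hsq : K / eps <= sqrt (INR N)).
  { rewrite <- (sqrt_pow2 (K / eps)) by (apply Rdiv_le_0_compat; lra).
    apply sqrt_le_1_alt. unfold M0 in HN. lra. }
  assert (Hsq0 : 0 < sqrt (INR N)) by (apply sqrt_lt_R0; lra).
  assert (Hb : K / sqrt (INR N) <= eps).
  { apply Rle_div_l; auto. apply Rle_div_l in Hsq; [|lra]. lra. }
  unfold infN.
  apply Rle_trans with (- K / sqrt (INR N)).
  { unfold Rdiv in *. lra. }
  apply glb_lower with (Re (SN c (S (S m')) N 0)).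
  - exists 0. split; [|reflexivity]. exists 0%Z.
    assert (0 < Rpower (INR N) (- INR (S (S m')) + / INR (S (S m')))) by (unfold Rpower; apply exp_pos).
    lra.
  - intros y [alpha [Hal ->]]. apply core; auto.
Qed.
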